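(* Let $s\ge1$ and let $T\in\mathcal{T}(s)\setminus B(s\varpi_2)$ with $T$ not equal to the tableau all of whose $s$ columns are $\binom{1}{\bar1}$. Then there is a unique $a\in\{1,\dots,n,\bar n\}$ and a unique $m\in\mathbb{Z}_{>0}$ such that $T$ contains, as a sequence of consecutive columns, one of the following configurations (writing $\binom{a}{\bar a}^{m}$ for $m$ consecutive columns $\binom{a}{\bar a}$): (i) $\binom{a}{b_1}\binom{a}{\bar a}^{m}\binom{c_1}{d_1}$, where $b_1\ne\bar a$, and $c_1\neq a$ or $d_1\ne\bar a$; (ii) $\binom{b_2}{c_2}\binom{a}{\bar a}^{m}\binom{d_2}{\bar a}$, where $d_2\ne a$, and $b_2\ne a$ or $c_2\neq\bar a$; (iii) $\binom{b_3}{c_3}\binom{a}{\bar a}^{m+1}\binom{d_3}{e_3}$, where $b_3\ne a$ and $e_3\ne\bar a$; where a bounding column $\binom{c_1}{d_1}$, $\binom{b_2}{c_2}$, $\binom{b_3}{c_3}$ or $\binom{d_3}{e_3}$ may be absent when the block of columns $\binom{a}{\bar a}$ reaches the corresponding end of $T$, in which case the condition on it is vacuous.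
   Context: Let $n\ge4$. Alphabet: $1<2<\dots<n-1<\{n,\bar n\}<\overline{n-1}<\dots<\bar2<\bar1$, a partial order in which $n$ and $\bar n$ are incomparable; we set $\bar{\bar i}=i$. A tableau of shape $(k,k)$ is a sequence of $k$ columns, column $j$ having top entry $a_j$ and bottom entry $b_j$ from this alphabet; we write it $\binom{a_1}{b_1}\cdots\binom{a_k}{b_k}$ (here $\binom{x}{y}$ denotes a column with top $x$ and bottom $y$, not a binomial coefficient). Conditions: (C1) $a_j\le a_{j+1}$ and $b_j\le b_{j+1}$ for all $j$; (C2) $b_j\not\le a_j$ for all $j$; (C3) there is no $j$ and letter $x$ with $a_j=a_{j+1}=x$, $b_{j+1}=\bar x$, and no $j$ and $x$ with $a_j=x$, $b_j=b_{j+1}=\bar x$; (C4) there are no $j<j'$ with $\binom{a_j}{b_j}=\binom{n-1}{n}$ and $\binom{a_{j'}}{b_{j'}}=\binom{n}{\overline{n-1}}$, and no $j<j'$ with $\binom{a_j}{b_j}=\binom{n-1}{\bar n}$ and $\binom{a_{j'}}{b_{j'}}=\binom{\bar n}{\overline{n-1}}$; (C5) no column equals $\binom{1}{\bar1}$. $B(k\varpi_2)$ denotes the set of tableaux of shape $(k,k)$ satisfying (C1)--(C5) (the Kashiwara--Nakashima tableaux of type $D_n$ of shape $(k,k)$), and $\mathcal{T}(s)$ the set of tableaux of shape $(s,s)$ satisfying (C1), (C2) and (C4). *)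

(* Defs.v *)
From mathcomp Require Import all_boot.
Set Implicit Arguments. Unset Strict Implicit. Unset Printing Implicit Defensive.

(* A letter of the type D_n alphabet: (false, k) is the letter k and
   (true, k) is the letter \bar k, for 1 <= k <= n. *)
Definition letter := (bool * nat)%type.

Definition valid_letter (n : nat) (x : letter) : bool := (0 < x.2 <= n).

Definition bar (x : letter) : letter := (~~ x.1, x.2).

(* the partial order 1 < 2 < ... < n-1 < {n, \bar n} < \bar{n-1} < ... < \bar 1 *)
Definition lle (n : nat) (x y : letter) : bool :=
  match x, y with
  | (false, i), (false, j) => i <= j
  | (true, i), (true, j) => j <= i
  | (false, i), (true, j) => ~~ ((i == n) && (j == n))
  | (true, _), (false, _) => false
  end.

(* A column (top, bottom); a tableau of shape (s,s) is the sequence of its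
   s columns from left to right. *)
Definition column := (letter * letter)%type.
Definition tableau := seq column.

Definition C0 (n s : nat) (T : tableau) : bool :=
  (size T == s) && all (fun c => valid_letter n c.1 && valid_letter n c.2) T.

Definition C1 (n : nat) (T : tableau) : bool :=
  sorted (fun c d => lle n c.1 d.1 && lle n c.2 d.2) T.

Definition C2 (n : nat) (T : tableau) : bool :=
  all (fun c => ~~ lle n c.2 c.1) T.

Definition C3 (T : tableau) : bool :=
  sorted (fun c d => ~~ ((c.1 == d.1) && (d.2 == bar c.1))
                  && ~~ ((c.2 == d.2) && (c.2 == bar c.1))) T.

Definition C4 (n : nat) (T : tableau) : Prop :=
  forall i j, i < j < size T ->
    ~ (nth (bar (false, 1), bar (false, 1)) T i = ((false, n.-1), (false, n)) /\
       nth (bar (false, 1), bar (false, 1)) T j = ((false, n), (true, n.-1))) /\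
    ~ (nth (bar (false, 1), bar (false, 1)) T i = ((false, n.-1), (true, n)) /\
       nth (bar (false, 1), bar (false, 1)) T j = ((true, n), (true, n.-1))).

Definition C5 (T : tableau) : bool :=
  all (fun c => c != ((false, 1), (true, 1))) T.

Definition inT (n s : nat) (T : tableau) : Prop :=
  [/\ C0 n s T, C1 n T, C2 n T & C4 n T].

Definition inB (n s : nat) (T : tableau) : Prop :=
  C0 n s T /\ C1 n T /\ C2 n T /\ C3 T /\ C4 n T /\ C5 T.

Definition admissible_a (n : nat) (a : letter) : bool :=
  ((a.1 == false) && (0 < a.2 <= n)) || (a == (true, n)).

Definition config1 (T : tableau) (a : letter) (m : nat) : Prop :=
  exists L R b1, T = L ++ (a, b1) :: nseq m (a, bar a) ++ R /\ b1 <> bar a /\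
    (forall c R', R = c :: R' -> c <> (a, bar a)).

Definition config2 (T : tableau) (a : letter) (m : nat) : Prop :=
  exists L R d2, T = L ++ nseq m (a, bar a) ++ (d2, bar a) :: R /\ d2 <> a /\
    (forall L' c, L = rcons L' c -> c <> (a, bar a)).

Definition config3 (T : tableau) (a : letter) (m : nat) : Prop :=
  exists L R, T = L ++ nseq m.+1 (a, bar a) ++ R /\
    (forall L' c, L = rcons L' c -> c.1 <> a) /\
    (forall c R', R = c :: R' -> c.2 <> bar a).

Definition config (T : tableau) (a : letter) (m : nat) : Prop :=
  config1 T a m \/ config2 T a m \/ config3 T a m.

(* Main.v *)
Require Import Defs.
From mathcomp Require Import all_boot zify.
Set Implicit Arguments. Unset Strict Implicit. Unset Printing Implicit Defensive.

Definition isE (c : column) : bool := c.2 == bar c.1.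
Definition r1 n (c d : column) : bool := lle n c.1 d.1 && lle n c.2 d.2.
Definition r3 (c d : column) : bool := ~~ ((c.1 == d.1) && (d.2 == bar c.1))
                  && ~~ ((c.2 == d.2) && (c.2 == bar c.1)).

Lemma lle_antisym n x y : lle n x y -> lle n y x -> x = y.
Proof. case: x => [[] i]; case: y => [[] j] //= H1 H2; congr pair; lia. Qed.

Lemma lle_bar n x y : lle n x y -> lle n (bar x) (bar y) -> x = y.
Proof. case: x => [[] i]; case: y => [[] j] //= H1 H2; congr pair; lia. Qed.

Lemma lle_trans n x y z : y.2 <= n -> lle n x y -> lle n y z -> lle n x z.
Proof. case: x => [[] i]; case: y => [[] j]; case: z => [[] k] //=; lia. Qed.
Lemma pw n s T : C0 n s T -> C1 n T -> pairwise (r1 n) T.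
Proof.
case/andP=> _ Hall; rewrite /C1 (@sorted_pairwise_in _ (fun c : column => valid_letter n c.1 && valid_letter n c.2)) //.
move=> y x z; rewrite /in_mem /= => /andP[/andP[_ Hy1] /andP[_ Hy2]] _ _ /andP[a1 a2] /andP[b1 b2].
by rewrite /r1 (lle_trans Hy1 a1 b1) (lle_trans Hy2 a2 b2).
Qed.

Lemma isE_le n y a : isE y -> r1 n y (a, bar a) -> y = (a, bar a).
Proof.
case: y => y1 y2; rewrite /isE /r1 /= => /eqP -> /andP[H1 H2].
by rewrite (lle_bar H1 H2).
Qed.

Lemma isE_ge n y a : isE y -> r1 n (a, bar a) y -> y = (a, bar a).
Proof.
case: y => y1 y2; rewrite /isE /r1 /= => /eqP -> /andP[H1 H2].
by rewrite (lle_bar H1 H2).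
Qed.

Lemma r1_antisym n x y : r1 n x y -> r1 n y x -> x = y.
Proof.
case: x => x1 x2; case: y => y1 y2; rewrite /r1 /= => /andP[H1 H2] /andP[H3 H4].
by rewrite (lle_antisym H1 H3) (lle_antisym H2 H4).
Qed.

Definition lastne (L : tableau) (x : column) := forall L' c, L = rcons L' c -> c <> x.
Definition headne (R : tableau) (x : column) := forall c R', R = c :: R' -> c <> x.

Lemma clean n L k a R : pairwise (r1 n) (L ++ nseq k (a, bar a) ++ R) -> 0 < k ->
  lastne L (a, bar a) -> headne R (a, bar a) -> ~~ has isE L /\ ~~ has isE R.
Proof.
set x := (a, bar a).
rewrite !pairwise_cat => /and3P[HLM HL /and3P[HMR _ HR]] k0 HlL HhR; split.
- apply/negP=> /hasP[y yL Ey].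
  have yx : y = x.
    apply: isE_le Ey _. move/allrelP: HLM; apply => //.
    by rewrite mem_cat mem_nseq k0 eqxx.
  case/lastP: L HLM HL HlL yL => [//|L0 z] HLM HL HlL.
  rewrite mem_rcons inE => /orP[/eqP yz|yL0]; first by apply: (HlL L0 z erefl); rewrite -yz.
  apply: (HlL L0 z (erefl _)).
  apply: r1_antisym.
  + move/allrelP: HLM; apply; first by rewrite mem_rcons inE eqxx.
    by rewrite mem_cat mem_nseq k0 eqxx.
  + rewrite pairwise_rcons in HL; case/andP: HL => /allP H _.
    by rewrite -yx; apply: H.
- apply/negP=> /hasP[y yR Ey].
  have yx : y = x.
    apply: isE_ge Ey _. move/allrelP: HMR; apply => //.
    by rewrite mem_nseq k0 eqxx.
  case: R HLM HMR HR HhR yR => [//|z R0] _ HMR HR HhR.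
  rewrite inE => /orP[/eqP yz|yR0]; first by apply: (HhR z R0 erefl); rewrite -yz.
  apply: (HhR z R0 (erefl _)).
  apply: r1_antisym.
  + rewrite pairwise_cons in HR; case/andP: HR => /allP H _.
    by rewrite -yx; apply: H.
  + move/allrelP: HMR; apply; last by rewrite inE eqxx.
    by rewrite mem_nseq k0 eqxx.
Qed.

Lemma nseq_uniq k k' x R R' : isE x -> ~~ has isE R -> ~~ has isE R' ->
  nseq k x ++ R = nseq k' x ++ R' -> k = k' /\ R = R'.
Proof.
move=> Ex HR HR'; elim: k k' => [|k IH] [|k'] //=.
- by move=> E; move: HR; rewrite E /= Ex.
- by move=> E; move: HR'; rewrite -E /= Ex.
- by case=> /IH [-> ->].
Qed.

Lemma decomp_uniq L k x R L' k' x' R' : 0 < k -> 0 < k' -> isE x -> isE x' ->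
  ~~ has isE L -> ~~ has isE R -> ~~ has isE L' -> ~~ has isE R' ->
  L ++ nseq k x ++ R = L' ++ nseq k' x' ++ R' -> [/\ L = L', x = x', k = k' & R = R'].
Proof.
case: k => // k _; case: k' => // k' _ Ex Ex' HL HR HL' HR'.
elim: L L' HL HL' => [|y L IH] [|y' L'] /= HL HL'.
- case=> -> E; have [-> ->] := nseq_uniq Ex' HR HR' E; by [].
- by case=> E _; move: HL'; rewrite -E Ex.
- by case=> E _; move: HL; rewrite E Ex'.
- case=> -> /IH; case/norP: HL => _ HL; case/norP: HL' => _ HL'.
  by case/(_ HL HL') => -> -> -> ->.
Qed.

Definition decomp (T : tableau) (a : letter) m (L : tableau) k R :=
  [/\ T = L ++ nseq k (a, bar a) ++ R, 0 < k, lastne L (a, bar a), headne R (a, bar a) &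
   [\/ k = m /\ (exists L' b, L = rcons L' (a, b)),
       k = m /\ (exists d R', R = (d, bar a) :: R') |
       [/\ k = m.+1, (forall L' c, L = rcons L' c -> c.1 <> a) &
          (forall c R', R = c :: R' -> c.2 <> bar a)]]].

Lemma config_dec T a m : 0 < m -> config T a m -> exists L k R, decomp T a m L k R.
Proof.
move=> m0 [[L [R [b1 [E [Hb HR]]]]]|[[L [R [d2 [E [Hd HL]]]]]|[L [R [E [HL HR]]]]]].
- exists (rcons L (a, b1)), m, R; split => //.
  + by rewrite E cat_rcons.
  + by move=> L' c /rcons_inj [_ <-] [].

  + by apply: Or31; split => //; exists L, b1.
- exists L, m, ((d2, bar a) :: R); split => //.
  + by move=> c R' [<- _] [].
  + by apply: Or32; split => //; exists d2, R.
- exists L, m.+1, R; split => //.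
  + by move=> L' c /HL H E1; apply: H; rewrite E1.
  + by move=> c R' /HR H E1; apply: H; rewrite E1.
  + by apply: Or33.
Qed.

Lemma config_uniq n T a m a' m' : pairwise (r1 n) T -> 0 < m -> 0 < m' ->
  config T a m -> config T a' m' -> a' = a /\ m' = m.
Proof.
move=> pw m0 m0' /(config_dec m0) [L [k [R [E k0 HL HR H]]]].
move=> /(config_dec m0') [L' [k' [R' [E' k0' HL' HR' H']]]].
have [cL cR] : ~~ has isE L /\ ~~ has isE R by apply: (@clean n L k a R _ k0 HL HR); rewrite -E.
have [cL' cR'] : ~~ has isE L' /\ ~~ has isE R' by apply: (@clean n L' k' a' R' _ k0' HL' HR'); rewrite -E'.
have Ex : isE (a, bar a) by rewrite /isE eqxx.
have Ex' : isE (a', bar a') by rewrite /isE eqxx.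
have [eL ex ek eR] := decomp_uniq k0 k0' Ex Ex' cL cR cL' cR' (etrans (esym E) E').
case: ex => ea; subst L' R' k' a' => _ _; split => //.
case: H => [[ek [L1 [b EL]]]|[ek [d [R1 ER]]]|[ek H1 H2]];
case: H' => [[ek' [L1' [b' EL']]]|[ek' [d' [R1' ER']]]|[ek' H1' H2']]; try lia.
- by case: (H1' _ _ EL).
- by case: (H2' _ _ ER).
- by case: (H1 _ _ EL').
- by case: (H2 _ _ ER').
Qed.

Lemma first_split (p : pred column) s : has p s ->
  exists L y R, s = L ++ y :: R /\ ~~ has p L /\ p y.
Proof.
elim: s => [|z s IH] //= /orP[pz|hs].
- by exists [::], z, s.
- case: (boolP (p z)) => pz; first by exists [::], z, s.
  have [L [y [R [-> [hL py]]]]] := IH hs.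
  by exists (z :: L), y, R; rewrite /= negb_or pz hL.
Qed.

Lemma run s x : exists k R, s = nseq k x ++ R /\ headne R x.
Proof.
elim: s => [|z s [k [R [E H]]]].
- by exists 0, [::].
- case: (z =P x) => [->|zx].
  + by exists k.+1, R; rewrite E.
  + by exists 0, (z :: s); split => // c R' [<- _].
Qed.

Lemma r3_noE c d : ~~ isE c -> ~~ isE d -> r3 c d.
Proof.
case: c => c1 c2; case: d => d1 d2; rewrite /isE /r3 /= => Hc Hd.
apply/andP; split; apply/negP => /andP[/eqP e1 /eqP e2].
- by move: Hd; rewrite e2 e1 eqxx.
- by move: Hc; rewrite e2 eqxx.
Qed.

Lemma noE_path z s : ~~ isE z -> ~~ has isE s -> path r3 z s.
Proof.
elim: s z => [|y s IH] z //= Hz /norP[Hy Hs].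
by rewrite r3_noE // IH.
Qed.

Lemma noE_sorted s : ~~ has isE s -> sorted r3 s.
Proof. case: s => [|y s] //= /norP[Hy Hs]; exact: noE_path. Qed.

Lemma sorted_rcons2 (r : rel column) s l x :
  sorted r (rcons (rcons s l) x) = sorted r (rcons s l) && r l x.
Proof.
case: s => [|z s] /=; first by rewrite andbT.
by rewrite rcons_path last_rcons.
Qed.

Lemma adm_of n a : valid_letter n a -> ~~ lle n (bar a) a -> admissible_a n a.
Proof.
case: a => [[] i]; rewrite /valid_letter /admissible_a /=.
- by move=> _ /negbNE /andP[/eqP -> _].
- by move=> -> _.
Qed.

Theorem proposition4p1 (n s : nat) (T : tableau) :
  4 <= n -> 1 <= s ->
  inT n s T -> ~ inB n s T ->
  T <> nseq s ((false, 1), (true, 1)) ->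
  exists a m,
    [/\ admissible_a n a, 0 < m & config T a m] /\
    (forall a' m', admissible_a n a' -> 0 < m' -> config T a' m' ->
       a' = a /\ m' = m).
Proof.
move=> n4 s1 [H0 H1 H2 H4] nB nT.
have pwT := pw H0 H1.
have Hval : forall c, c \in T -> valid_letter n c.1 && valid_letter n c.2.
  by case/andP: H0 => _ /allP.
have Ex : has isE T.
  apply/negPn/negP => nh; apply: nB; do !split => //.
  - exact: noE_sorted.
  - apply/allP => c cT; apply/negP => /eqP ec.
    by move: (hasPn nh c cT); rewrite ec.
have [L [y [R1 [ET [cL Ey]]]]] := first_split Ex.
case: y ET Ey => [a b] ET /eqP /= Eb; subst b.
have yT : (a, bar a) \in T by rewrite ET mem_cat inE eqxx orbT.
have adm : admissible_a n a.
  have /andP[va _] := Hval _ yT.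
  exact: adm_of va (allP H2 _ yT).
have [j [R [ER HR]]] := run R1 (a, bar a).
set x := (a, bar a).
have ET' : T = L ++ nseq j.+1 x ++ R by rewrite ET ER.
have HR' : headne R x by [].
have HL : lastne L x.
  move=> L' c EL ec; move: cL; rewrite EL has_rcons ec /isE eqxx //.
have [_ cR] : ~~ has isE L /\ ~~ has isE R.
  by apply: (@clean n L j.+1 a R _ (ltn0Sn j) HL HR'); rewrite -ET'.
suff [m [m0 cf]] : exists m, 0 < m /\ config T a m.
  exists a, m; split; first by split.
  move=> a' m' _ m0' cf'; exact: (config_uniq pwT m0 m0' cf cf').
have [[L' [l [EL el]]]|nA] : (exists L' l, L = rcons L' l /\ l.1 = a) \/
    (forall L' c, L = rcons L' c -> c.1 <> a).
  case: (lastP L) => [|L' l].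
  - by right => L' c /(congr1 size); rewrite size_rcons.
  - case: (l.1 =P a) => e; first by left; exists L', l.
    by right => L'' c /rcons_inj [_ <-].
  exists j.+1; split => //; left.
  exists L', R, l.2; split; last split.
  - by rewrite ET' EL cat_rcons /x -el -surjective_pairing.
  - move=> e2; move: cL; rewrite EL has_rcons /isE /= e2 el eqxx //.
  - exact: HR'.
have [[r [R' [ER2 er]]]|nB'] : (exists r R', R = r :: R' /\ r.2 = bar a) \/
    (forall c R', R = c :: R' -> c.2 <> bar a).
  case: R {ER ET' HR HR' cR} => [|r R'].
  - by right.
  - case: (r.2 =P bar a) => e; first by left; exists r, R'.
    by right => c R'' [<- _].
  exists j.+1; split => //; right; left.
  exists L, R', r.1; split; last split.
  - by rewrite ET' ER2 /x -er -surjective_pairing.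
  - move=> e1; move: cR; rewrite ER2 /= /isE er e1 eqxx //.
  - move=> L'' c EL ec; apply: (HL L'' c EL ec).
case: j ET' {ER HR} => [|j] ET'; last first.
  exists j.+1; split => //; right; right.
  by exists L, R; split.
exfalso.
have Hr : forall c, c \in L -> r1 n c x.
  move=> c cL0; move: pwT; rewrite ET' pairwise_cat => /andP[/allrelP H _].
  by apply: H => //; rewrite inE eqxx.
have Hr' : forall c, c \in R -> r1 n x c.
  move=> c cR0; move: pwT; rewrite ET' pairwise_cat => /and3P[_ _].
  by rewrite pairwise_cons => /andP[/allP H _]; apply: H.
have Hne : a <> (false, 1).
  move=> ea.
  have L0 : L = [::].
    have F : forall L' l, L = rcons L' l -> False.
      move=> L' l EL; apply: (nA L' l EL).
      have lL : l \in L by rewrite EL mem_rcons inE eqxx.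
      have lT : l \in T by rewrite ET' mem_cat lL.
      have /andP[vl _] := Hval l lT.
      have /andP[le _] := Hr l lL.
      move: vl le; rewrite /x ea; case: l.1 => [[] i] //=; rewrite /valid_letter /=.
      by move=> H le; congr pair; lia.
    by case: (lastP L) F => // L' l /(_ L' l erefl).
  have R0 : R = [::].
    case: R Hr' nB' ET' {HR' cR} => // r R' Hr' nB' ET'.
    exfalso; apply: (nB' r R' erefl).
    have rR : r \in r :: R' by rewrite inE eqxx.
    have rT : r \in T by rewrite ET' mem_cat /= inE rR !orbT.
    have /andP[_ vr] := Hval r rT.
    have /andP[_ le] := Hr' r rR.
    move: vr le; rewrite /x ea /=; case: r.2 => [[] i] //=; rewrite /valid_letter /=.
    by move=> H le; rewrite /bar /=; congr pair; lia.
  apply: nT; move: H0; rewrite /C0 ET' L0 R0 /=.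
  by case/andP => /eqP <- _; rewrite /x ea.
apply: nB; do !split => //.
- rewrite /C3 ET' /= -/r3 sorted_cat_cons; apply/andP; split.
  + case: (lastP L) cL nA => [|L' l] // cL0 nA0.
    rewrite sorted_rcons2 noE_sorted //=.
    move: cL0; rewrite has_rcons negb_or => /andP[nl _].
    rewrite /r3 /x /=; apply/andP; split; apply/negP => /andP[/eqP e1 /eqP e2].
    * exact: (nA0 L' l erefl).
    * by move: nl; rewrite /isE e2 eqxx.
  + case: R cR nB' {ET' HR' Hr'} => [|r R'] //= cR0 nB0.
    case/norP: cR0 => nr nR'; rewrite noE_path // andbT.
    apply/andP; split; apply/negP => /andP[/eqP e1 /eqP e2].
    * exact: (nB0 r R' erefl).
    * exact: (nB0 r R' erefl).
- apply/allP => c; rewrite ET' mem_cat /= inE => /or3P[cL0|/eqP ->|cR0].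
  + apply/negP => /eqP ec; move: (hasPn cL c cL0); rewrite ec //.
  + by apply/negP => /eqP [ea _].
  + apply/negP => /eqP ec; move: (hasPn cR c cR0); rewrite ec //.
Qed.
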